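(* Let $M(k,l,m,n)=\langle x,y \mid y^m=x^l,\ x^n=1,\ y^{-1}xy=x^k\rangle$ be a metacyclic group, where $\gcd(n,k)=1$, $k^m\equiv 1 \pmod n$ and $l(k-1)\equiv 0\pmod n$. Let $I$ be a set of integers containing exactly one representative of each orbit of the action of $K=\langle y\rangle$ on $\mathbb{Z}/n$ given by $y\cdot u=ku$, and for $a\in I$ let $Ka=\{ak^i \bmod n: i\ge 0\}$. For $a,b,c\in I$ let $S(a,b,c)=|\{(r,s)\in Ka\times Kb : r+s\equiv c\pmod n\}|$. If $a,b,c\in I$ satisfy $S(a,b,c)\neq 0$, then $$\Big\{\frac{al}{n}\Big\}+\Big\{\frac{bl}{n}\Big\}-\Big\{\frac{cl}{n}\Big\}$$ is an integer, where $\{t\}$ denotes the fractional part of $t$. *)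

(* Defs.v *)
From mathcomp Require Import all_boot all_order all_algebra.
From mathcomp Require Import boolp.
Set Implicit Arguments. Unset Strict Implicit. Unset Printing Implicit Defensive.
Import Order.TTheory GRing.Theory Num.Theory.
Local Open Scope ring_scope.

Definition Korbit (n : nat) (k a : int) : {set 'I_n} :=
  [set r : 'I_n | `[< exists i : nat, (r%:Z = (a * k ^+ i) %% n%:Z)%Z >]].

Definition Scount (n : nat) (k a b c : int) : nat :=
  #|[set rs : 'I_n * 'I_n |
      [&& rs.1 \in Korbit n k a, rs.2 \in Korbit n k b &
          (((rs.1 : nat) + (rs.2 : nat))%:Z == c %[mod n%:Z])%Z]]|.

Definition orbit_transversal (n : nat) (k : int) (I : int -> Prop) : Prop :=
  forall u : int, exists! a : int,
    I a /\ exists i : nat, (u = a * k ^+ i %[mod n%:Z])%Z.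

Definition frac_part (t : rat) : rat := t - (Num.floor t)%:~R.

(* Main.v *)
Require Import Defs.
From mathcomp Require Import all_boot all_order all_algebra.
From mathcomp Require Import boolp ring.
Import Order.TTheory GRing.Theory Num.Theory.
Local Open Scope ring_scope.

Lemma lk_pow (n : nat) (k l : int) :
  (l * (k - 1) = 0 %[mod n%:Z])%Z -> forall i : nat, (n%:Z %| l * k ^+ i - l)%Z.
Proof.
move=> hl; have h1 : (n%:Z %| l * k - l)%Z.
  have -> : l * k - l = l * (k - 1) by ring.
  by apply/dvdz_mod0P; rewrite hl mod0z.
elim=> [|i IH]; first by rewrite expr0 mulr1 subrr dvdz0.
have -> : l * k ^+ i.+1 - l = (l * k ^+ i - l) * k + (l * k - l) by rewrite exprS; ring.
by rewrite rpredD // dvdz_mulr.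
Qed.

Lemma modsub (n : nat) (x : int) : (n%:Z %| x - (x %% n%:Z)%Z)%Z.
Proof. by rewrite -eqz_mod_dvd modz_mod. Qed.

Theorem mainTheorem2 (k l : int) (m n : nat) (I : int -> Prop)
  (hn : (0 < n)%N)
  (hcop : coprimez n%:Z k)
  (hkm : (k ^+ m = 1 %[mod n%:Z])%Z)
  (hl : (l * (k - 1) = 0 %[mod n%:Z])%Z)
  (hI : orbit_transversal n k I)
  (a b c : int) (ha : I a) (hb : I b) (hc : I c)
  (hS : Scount n k a b c <> 0%N) :
  exists z : int,
    frac_part (((a * l)%:~R : rat) / n%:R) + frac_part (((b * l)%:~R : rat) / n%:R)
      - frac_part (((c * l)%:~R : rat) / n%:R) = z%:~R :> rat.
Proof.
move: hS; rewrite /Scount => /eqP; rewrite -lt0n => /card_gt0P [[r s]].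
rewrite inE /= => /and3P [hr hs hrs].
move: hr hs; rewrite !inE => /asboolP [i hi] /asboolP [j hj].
have hd : (n%:Z %| a * l + b * l - c * l)%Z.
  have e : a * l + b * l - c * l =
     (a * k ^+ i - r%:Z) * l - a * (l * k ^+ i - l)
   + ((b * k ^+ j - s%:Z) * l - b * (l * k ^+ j - l))
   + (r%:Z + s%:Z - c) * l by ring.
  rewrite e; apply: rpredD; first apply: rpredD.
  - apply: rpredB; first by apply: dvdz_mulr; rewrite hi modsub.
    by apply: dvdz_mull; apply: lk_pow.
  - apply: rpredB; first by apply: dvdz_mulr; rewrite hj modsub.
    by apply: dvdz_mull; apply: lk_pow.
  - by apply: dvdz_mulr; rewrite -eqz_mod_dvd.
case/dvdzP: hd => q hq.
exists (q - Num.floor ((a * l)%:~R / n%:R : rat) - Num.floor ((b * l)%:~R / n%:R : rat)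
          + Num.floor ((c * l)%:~R / n%:R : rat)).
rewrite /frac_part.
have hn0 : (n%:R : rat) != 0 by rewrite pnatr_eq0 -lt0n.
have hq' : ((a * l)%:~R : rat) / n%:R + (b * l)%:~R / n%:R - (c * l)%:~R / n%:R = q%:~R.
  have h2 : ((a * l + b * l - c * l)%:~R : rat) = q%:~R * n%:R by rewrite hq intrM.
  move: h2; rewrite ?intrB ?intrD => h2.
  apply: (mulIf hn0); rewrite -h2; field; exact: hn0.
rewrite !(intrD, intrB, intrN, rmorphD, rmorphB) -hq'; ring.
Qed.
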